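(* Let $X_1,X_2$ be locally compact Hausdorff spaces, $\mathcal{A}_i\subset\mathcal{C}_c(X_i)$ subalgebras and $N_i$ uniform norms on $\mathcal{A}_i$. For all Borel probability measures $\eta_1,m_1$ on $X_1$ and $\eta_2,m_2$ on $X_2$, \[ \mathrm{dist}_{N_1\otimes N_2}(\eta_1\otimes\eta_2,m_1\otimes m_2)\ll\max(\mathrm{dist}_{N_1}(\eta_1,m_1),\mathrm{dist}_{N_2}(\eta_2,m_2)), \] where the implied constant depends only on $N_1$ and $N_2$.
   Context: A norm $N$ on $\mathcal{A}\subset\mathcal{C}_c(X)$ is uniform if $\|\phi\|_\infty\le F\,N(\phi)$ for some $F$ and all $\phi$. $\mathrm{dist}_N(\mu,\nu)=\sup\{|\mu(\phi)-\nu(\phi)|:\phi\in\mathcal{A},N(\phi)\le1\}$. $N_1\otimes N_2$ is the projective tensor norm on the algebraic tensor product $\mathcal{A}_1\otimes\mathcal{A}_2\subset\mathcal{C}_c(X_1\times X_2)$: $(N_1\otimes N_2)(\phi)=\inf\sum_iN_1(\phi_{1i})N_2(\phi_{2i})$ over representations $\phi=\sum_i\phi_{1i}\otimes\phi_{2i}$. *)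

(* Defs.v *)
From HB Require Import structures.
From mathcomp Require Import all_boot all_order all_algebra.
From mathcomp Require Import all_classical all_reals all_analysis.
Set Implicit Arguments. Unset Strict Implicit. Unset Printing Implicit Defensive.
Import Order.TTheory GRing.Theory Num.Theory.
Import numFieldNormedType.Exports.
Local Open Scope classical_set_scope.
Local Open Scope ring_scope.

Definition borel (T : ptopologicalType) := g_sigma_algebraType (@open T).

Section defs.
Context {R : realType}.

Definition Cc {T : topologicalType} (phi : T -> R) :=
  continuous phi /\ compact (closure [set x | phi x != 0]).

Definition subalgebra_Cc {T : topologicalType} (A : set (T -> R)) :=
  [/\ (forall phi, A phi -> Cc phi),
      A (fun _ => 0),
      (forall phi psi, A phi -> A psi -> A (fun x => phi x + psi x)),
      (forall (a : R) phi, A phi -> A (fun x => a * phi x)) &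
      (forall phi psi, A phi -> A psi -> A (fun x => phi x * psi x))].

(* N is a norm on A (values of N outside A are irrelevant) *)
Definition norm_on {T : Type} (A : set (T -> R)) (N : (T -> R) -> R) :=
  [/\ (forall phi, A phi -> 0 <= N phi),
      (forall phi, A phi -> N phi = 0 -> phi = (fun _ => 0)),
      (forall (a : R) phi, A phi -> N (fun x => a * phi x) = `|a| * N phi) &
      (forall phi psi, A phi -> A psi ->
         N (fun x => phi x + psi x) <= N phi + N psi)].

Definition uniform_norm {T : Type} (A : set (T -> R)) (N : (T -> R) -> R) :=
  norm_on A N /\
  exists F : R, forall phi, A phi -> forall x, `|phi x| <= F * N phi.

Definition tensor_rep {T1 T2 : Type} (A1 : set (T1 -> R)) (A2 : set (T2 -> R))
  (phi : T1 * T2 -> R) (n : nat) (f1 : 'I_n -> T1 -> R) (f2 : 'I_n -> T2 -> R) :=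
  [/\ (forall i, A1 (f1 i)), (forall i, A2 (f2 i)) &
      phi = (fun z => \sum_(i < n) f1 i z.1 * f2 i z.2)].

Definition tensor_alg {T1 T2 : Type} (A1 : set (T1 -> R)) (A2 : set (T2 -> R)) :
  set (T1 * T2 -> R) :=
  [set phi | exists n f1 f2, @tensor_rep T1 T2 A1 A2 phi n f1 f2].

Definition tensor_norm {T1 T2 : Type} (A1 : set (T1 -> R)) (A2 : set (T2 -> R))
  (N1 : (T1 -> R) -> R) (N2 : (T2 -> R) -> R) (phi : T1 * T2 -> R) : \bar R :=
  ereal_inf [set s | exists n f1 f2, @tensor_rep T1 T2 A1 A2 phi n f1 f2 /\
                      s = (\sum_(i < n) N1 (f1 i) * N2 (f2 i))%:E].

Definition distN {d} {T : measurableType d} (A : set (T -> R))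
  (N : (T -> R) -> \bar R) (mu nu : set T -> \bar R) : \bar R :=
  ereal_sup [set `| (\int[mu]_x (phi x)%:E - \int[nu]_x (phi x)%:E)%E |%E
            | phi in [set phi | A phi /\ (N phi <= 1)%E]].

End defs.

(* Main.v *)
Require Import Defs.
From HB Require Import structures.
From mathcomp Require Import all_boot all_order all_algebra.
From mathcomp Require Import all_classical all_reals all_analysis.
From mathcomp Require Import measurable_realfun.
From mathcomp Require Import ring.
Import Order.TTheory GRing.Theory Num.Theory.
Import numFieldNormedType.Exports.
Local Open Scope classical_set_scope.
Local Open Scope ring_scope.
Set Implicit Arguments. Unset Strict Implicit.
Section helpers.
Variable R : realType.

Lemma cont_meas (X : ptopologicalType) (f : X -> R) :
  continuous f -> measurable_fun [set: borel X] f.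
Proof.
move=> /continuousP cf; apply: (measurability _ (measurable_realfun.RGenOpens.measurableE R)).
move=> _ [_ [a [b ->] <-]]; apply: sub_sigma_algebra; rewrite setTI.
exact/cf/interval_open.
Qed.

Lemma int_fin d (T : measurableType d) (P : probability T R) (f : T -> R) (B : R) :
  measurable_fun setT f -> (forall x, `|f x| <= B) ->
  P.-integrable setT (EFin \o f) /\
  exists r, (\int[P]_x (f x)%:E = r%:E)%E /\ `|r| <= B.
Proof.
move=> mf fB.
have iP : P.-integrable setT (EFin \o f).
  apply: measurable_bounded_integrable => //.
    by apply: (le_lt_trans (probability_le1 P measurableT)); rewrite ltry.
  rewrite /bounded_near; near=> M => x _ /=; apply: le_trans (fB x) _.
  near: M; apply: nbhs_pinfty_ge; exact: num_real.
split => //.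
have hf : (\int[P]_x (f x)%:E)%E \is a fin_num by exact: integrable_fin_num iP.
exists (fine (\int[P]_x (f x)%:E)%E).
split; first by rewrite (fineK hf).
rewrite -lee_fin -abse_EFin (fineK hf) (le_trans (le_abse_integral _ _ _)) //.
  by apply/measurable_EFinP.
have B0 : 0 <= B by apply: le_trans (fB point).
apply: le_trans (@integral_le_bound _ _ _ P setT _ B%:E _ _ _ _) _ => //.
- exact/measurable_EFinP.
- by apply: aeW => x _ /=; rewrite lee_fin fB.
rewrite -[X in (_ <= X)%E]mule1; apply: lee_wpmul2l; [by rewrite lee_fin | exact: probability_le1].
Unshelve. all: by end_near.
Qed.

Lemma int_prod d1 d2 (T1 : measurableType d1) (T2 : measurableType d2)
  (P1 : probability T1 R) (P2 : probability T2 R) (f : T1 -> R) (g : T2 -> R)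
  (Bf Bg : R) (a b : R) :
  measurable_fun setT f -> measurable_fun setT g ->
  (forall x, `|f x| <= Bf) -> (forall x, `|g x| <= Bg) ->
  (\int[P1]_x (f x)%:E = a%:E)%E -> (\int[P2]_x (g x)%:E = b%:E)%E ->
  (P1 \x P2)%E.-integrable setT (EFin \o (fun z => f z.1 * g z.2)) /\
  (\int[(P1 \x P2)%E]_z (f z.1 * g z.2)%:E = (a * b)%:E)%E.
Proof.
move=> mf mg fB gB ha hb.
have mfg : measurable_fun setT (fun z : T1 * T2 => f z.1 * g z.2).
  by apply: measurable_funM; apply: measurableT_comp => //.
have fgB : forall z : T1 * T2, `|f z.1 * g z.2| <= Bf * Bg.
  move=> z; rewrite normrM; apply: ler_pM => //; exact: fB.
have [ifg _] := @int_fin _ _ (P1 \x P2)%E _ _ mfg fgB.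
split => //.
rewrite -(integral12_prod_meas1 ifg) /fubini_F /=.
have [ig _] := @int_fin _ _ P2 _ _ mg gB.
have [if_ _] := @int_fin _ _ P1 _ _ mf fB.
transitivity (\int[P1]_x ((f x)%:E * b%:E))%E.
  apply: eq_integral => x _.
  rewrite -hb -integralZl //.
by rewrite integralZr // ha EFinM.
Qed.

Definition II d (T : measurableType d) (P : probability T R) (f : T -> R) : R :=
  fine (\int[P]_x (f x)%:E)%E.

Lemma int_fine d (T : measurableType d) (P : probability T R) (f : T -> R) (B : R) :
  measurable_fun setT f -> (forall x, `|f x| <= B) ->
  [/\ P.-integrable setT (EFin \o f),
     (\int[P]_x (f x)%:E = (II P f)%:E)%E & `|II P f| <= B].
Proof.
move=> mf fB; have [iP [r [hr rB]]] := @int_fin _ _ P f B mf fB.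
by rewrite /II hr /=.
Qed.

Lemma tens_int d1 d2 (T1 : measurableType d1) (T2 : measurableType d2)
  (P1 : probability T1 R) (P2 : probability T2 R) n
  (f1 : 'I_n -> T1 -> R) (f2 : 'I_n -> T2 -> R) (B1 B2 : 'I_n -> R) :
  (forall i, measurable_fun setT (f1 i)) -> (forall i, measurable_fun setT (f2 i)) ->
  (forall i x, `|f1 i x| <= B1 i) -> (forall i x, `|f2 i x| <= B2 i) ->
  (\int[(P1 \x P2)%E]_z (\sum_(i < n) f1 i z.1 * f2 i z.2)%:E =
   (\sum_(i < n) II P1 (f1 i) * II P2 (f2 i))%:E)%E.
Proof.
move=> mf1 mf2 bf1 bf2.
have key i := @int_prod _ _ _ _ P1 P2 (f1 i) (f2 i) (B1 i) (B2 i)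
  (II P1 (f1 i)) (II P2 (f2 i)) (mf1 i) (mf2 i) (bf1 i) (bf2 i)
  (let: And3 _ h _ := int_fine P1 (mf1 i) (bf1 i) in h)
  (let: And3 _ h _ := int_fine P2 (mf2 i) (bf2 i) in h).
rewrite (eq_integral (fun z => \sum_(i < n) (f1 i z.1 * f2 i z.2)%:E)%E); last first.
  by move=> z _; rewrite sumEFin.
rewrite integral_sum //; last by move=> i; exact: (key i).1.
rewrite -sumEFin; apply: eq_bigr => i _; exact: (key i).2.
Qed.

Lemma dist_bound d (T : measurableType d) (A : set (T -> R)) (N : (T -> R) -> R)
  (hA : forall (a : R) phi, A phi -> A (fun x => a * phi x))
  (hN : norm_on A N) (eta m : probability T R) (mm : R) (f : T -> R) :
  A f -> eta.-integrable setT (EFin \o f) -> m.-integrable setT (EFin \o f) ->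
  (distN A (fun f => (N f)%:E) eta m <= mm%:E)%E ->
  `|II eta f - II m f| <= mm * N f.
Proof.
case: hN => N0 Nz NZ _ Af ie im hd.
have [Nf0|Nfp] := eqVneq (N f) 0.
  have f0 := Nz f Af Nf0.
  have h P : II P f = 0.
    by rewrite /II integral0_eq //= => x _; rewrite f0.
  by rewrite !h subrr normr0 Nf0 mulr0.
have Npos : 0 < N f by rewrite lt0r Nfp N0.
set c := (N f)^-1.
have Ag := hA c f Af.
have Ng : N (fun x => c * f x) = 1.
  by rewrite NZ // ger0_norm ?invr_ge0 ?N0 // mulVf.
have hI (P : probability T R) : P.-integrable setT (EFin \o f) ->
    (\int[P]_x ((fun x => c * f x) x)%:E = c%:E * (II P f)%:E)%E.
  move=> iP; rewrite /II fineK; last exact: integrable_fin_num iP.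
  rewrite -integralZl //; apply: eq_integral => x _; by rewrite EFinM.
have H : (`|(\int[eta]_x ((fun x => c * f x) x)%:E -
              \int[m]_x ((fun x => c * f x) x)%:E)%E|%E <= mm%:E)%E.
  apply: le_trans hd; apply: ereal_sup_ubound.
  by exists (fun x => c * f x) => //; split => //; rewrite Ng.
move: H; rewrite (hI _ ie) (hI _ im) -EFinM -EFinM -EFinB abse_EFin lee_fin.
rewrite -mulrBr normrM ger0_norm ?invr_ge0 ?N0 // => H.
have -> : `|II eta f - II m f| = N f * (c * `|II eta f - II m f|).
  by rewrite mulrA divff // mul1r.
by rewrite [mm * _]mulrC; apply: ler_wpM2l => //; exact: ltW.
Qed.
End helpers.

Theorem lemma7p9 (R : realType) (X1 X2 : ptopologicalType)
  (hX1 : hausdorff_space X1) (lcX1 : locally_compact [set: X1])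
  (hX2 : hausdorff_space X2) (lcX2 : locally_compact [set: X2])
  (A1 : set (X1 -> R)) (A2 : set (X2 -> R))
  (N1 : (X1 -> R) -> R) (N2 : (X2 -> R) -> R)
  (hA1 : subalgebra_Cc A1) (hA2 : subalgebra_Cc A2)
  (hN1 : uniform_norm A1 N1) (hN2 : uniform_norm A2 N2) :
  exists C : R,
    forall (eta1 m1 : probability (borel X1) R)
           (eta2 m2 : probability (borel X2) R),
      (distN (T := (borel X1 * borel X2)%type) (tensor_alg A1 A2)
         (tensor_norm A1 A2 N1 N2) (eta1 \x eta2) (m1 \x m2)
       <= C%:E * maxe (distN (T := borel X1) A1 (fun f => (N1 f)%:E) eta1 m1)
                      (distN (T := borel X2) A2 (fun f => (N2 f)%:E) eta2 m2))%E.
Proof.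
case: hA1 => cA1 A10 _ sA1 _; case: hA2 => cA2 A20 _ sA2 _.
case: hN1 => nN1 [F1 hF1]; case: hN2 => nN2 [F2 hF2].
have nN1' := nN1; have nN2' := nN2.
case: nN1' => N10 N1z N1Z _; case: nN2' => N20 N2z N2Z _.
pose G1 := Num.max F1 0; pose G2 := Num.max F2 0.
have G10 : 0 <= G1 by rewrite le_max lexx orbT.
have G20 : 0 <= G2 by rewrite le_max lexx orbT.
have bnd1 f : A1 f -> forall x, `|f x| <= G1 * N1 f.
  move=> Af x; apply: le_trans (hF1 f Af x) _; apply: ler_wpM2r.
    exact: N10.
  by rewrite le_max lexx.
have bnd2 f : A2 f -> forall x, `|f x| <= G2 * N2 f.
  move=> Af x; apply: le_trans (hF2 f Af x) _; apply: ler_wpM2r.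
    exact: N20.
  by rewrite le_max lexx.
have meas1 f : A1 f -> measurable_fun [set: borel X1] f.
  by move=> Af; apply: cont_meas; case: (cA1 f Af).
have meas2 f : A2 f -> measurable_fun [set: borel X2] f.
  by move=> Af; apply: cont_meas; case: (cA2 f Af).
exists (G1 + G2 + 1).
move=> eta1 m1 eta2 m2.
set d1 := distN (T := borel X1) A1 _ eta1 m1.
set d2 := distN (T := borel X2) A2 _ eta2 m2.
have d1ge0 : (0 <= d1)%E.
  have e : (fun x : X1 => 0 * (fun _ => (0:R)) x) = (fun _ => 0).
    by apply/funext => x; rewrite mulr0.
  have hN := N1Z 0 _ A10; rewrite e normr0 mul0r in hN.
  have : (`|(\int[eta1]_x (0:R)%:E - \int[m1]_x (0:R)%:E)%E|%E <= d1)%E.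
    apply: ereal_sup_ubound; exists (fun _ => 0) => //; split => //.
    by rewrite hN lee_fin.
  by rewrite !integral0_eq // subee // abse0.
have d2ge0 : (0 <= d2)%E.
  have e : (fun x : X2 => 0 * (fun _ => (0:R)) x) = (fun _ => 0).
    by apply/funext => x; rewrite mulr0.
  have hN := N2Z 0 _ A20; rewrite e normr0 mul0r in hN.
  have : (`|(\int[eta2]_x (0:R)%:E - \int[m2]_x (0:R)%:E)%E|%E <= d2)%E.
    apply: ereal_sup_ubound; exists (fun _ => 0) => //; split => //.
    by rewrite hN lee_fin.
  by rewrite !integral0_eq // subee // abse0.
have C0 : 0 < G1 + G2 + 1 by apply: ltr_wpDl => //; exact: addr_ge0.
case hM : (maxe d1 d2) => [mm| |]; last first.
- have : (0 <= -oo :> \bar R)%E by apply: le_trans d1ge0 _; rewrite -hM le_max lexx.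
  by rewrite leeNy_eq.
- by rewrite gt0_muley ?lte_fin // leey.
have hd1 : (d1 <= mm%:E)%E by rewrite -hM le_max lexx.
have hd2 : (d2 <= mm%:E)%E by rewrite -hM le_max lexx orbT.
have mm0 : 0 <= mm by rewrite -lee_fin; exact: le_trans d1ge0 hd1.
rewrite -EFinM.
apply: ge_ereal_sup => _ [phi [[n0 [g1 [g2 rep0]]] Nphi] <-].
pose K := mm * (G1 + G2).
have K0 : 0 <= K by apply: mulr_ge0 => //; exact: addr_ge0.
have comp n f1 f2 : tensor_rep A1 A2 phi f1 f2 ->
    forall (P1 : probability (borel X1) R) (P2 : probability (borel X2) R),
    (\int[(P1 \x P2)%E]_z (phi z)%:E =
      (\sum_(i < n) II P1 (f1 i) * II P2 (f2 i))%:E)%E.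
  case=> h1 h2 -> P1 P2.
  apply: (@tens_int _ _ _ _ _ P1 P2 n f1 f2 (fun i => G1 * N1 (f1 i))
     (fun i => G2 * N2 (f2 i))).
  - by move=> i; exact: meas1.
  - by move=> i; exact: meas2.
  - by move=> i; exact: bnd1.
  - by move=> i; exact: bnd2.
have claim n f1 f2 : tensor_rep A1 A2 phi f1 f2 ->
   `|\sum_(i < n) II eta1 (f1 i) * II eta2 (f2 i) -
     \sum_(i < n) II m1 (f1 i) * II m2 (f2 i)|
   <= K * \sum_(i < n) N1 (f1 i) * N2 (f2 i).
  case=> h1 h2 _.
  rewrite -sumrB mulr_sumr; apply: le_trans (ler_norm_sum _ _ _) _.
  apply: ler_sum => i _.
  have [ie1 _ _] := int_fine eta1 (meas1 _ (h1 i)) (bnd1 _ (h1 i)).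
  have [im1 _ ba1] := int_fine m1 (meas1 _ (h1 i)) (bnd1 _ (h1 i)).
  have [ie2 _ bb] := int_fine eta2 (meas2 _ (h2 i)) (bnd2 _ (h2 i)).
  have [im2 _ _] := int_fine m2 (meas2 _ (h2 i)) (bnd2 _ (h2 i)).
  have da := dist_bound (T := borel X1) sA1 nN1 (h1 i) ie1 im1 hd1.
  have db := dist_bound (T := borel X2) sA2 nN2 (h2 i) ie2 im2 hd2.
  set a := II eta1 (f1 i) in da *; set a' := II m1 (f1 i) in ba1 da *.
  set b := II eta2 (f2 i) in bb db *; set b' := II m2 (f2 i) in db *.
  have -> : a * b - a' * b' = (a - a') * b + a' * (b - b') by ring.
  apply: le_trans (ler_normD _ _) _; rewrite !normrM.
  have n1 := N10 _ (h1 i); have n2 := N20 _ (h2 i).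
  apply: le_trans (lerD (ler_pM _ _ da bb) (ler_pM _ _ ba1 db)) _ => //.
  by rewrite /K le_eqVlt; apply/orP; left; apply/eqP; ring.
have e0 := rep0.
move: e0 => /comp ce.
rewrite !ce -EFinB abse_EFin lee_fin.
set delta := (X in `|X|).
have cl n f1 f2 : tensor_rep A1 A2 phi f1 f2 ->
    `|delta| <= K * \sum_(i < n) N1 (f1 i) * N2 (f2 i).
  move=> r; have H := claim _ _ _ r.
  have E1 := etrans (esym (ce eta1 eta2)) (comp _ _ _ r eta1 eta2).
  have E2 := etrans (esym (ce m1 m2)) (comp _ _ _ r m1 m2).
  have F1' := EFin_inj E1; have F2' := EFin_inj E2.
  by rewrite /delta F1' F2'.
apply: (@le_trans _ _ K); last first.
  by rewrite /K mulrC; apply: ler_wpM2r => //; rewrite lerDl.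
have [K00|Kpos] := eqVneq K 0.
  by have := cl _ _ _ rep0; rewrite K00 mul0r.
have Kp : 0 < K by rewrite lt0r Kpos K0.
have : ((K^-1 * `|delta|)%:E <= tensor_norm A1 A2 N1 N2 phi)%E.
  apply: le_ereal_inf_tmp => _ [n [f1 [f2 [r ->]]]].
  by rewrite lee_fin ler_pdivrMl // cl.
move=> /le_trans /(_ Nphi); rewrite lee_fin ler_pdivrMl // mulr1.
by [].
Qed.
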